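(* Let $q$ be a prime power, $n=2^v$ with $v\ge1$ and $q$ odd. Let $s,t$ be integers with $s$ odd, $qt\equiv t\pmod{2^v}$ and $t\not\equiv0\pmod{2^v}$. Type-I duadic splittings of $\mathbb{Z}_{2^v}$ given by $\rho_{s,t}$ exist if and only if $\nu_2(q^j-s)>\nu_2(t)$ for all integers $j\ge0$.
   Context: $\mu_q:\mathbb{Z}_n\to\mathbb{Z}_n$, $i\mapsto qi\bmod n$; $P\subseteq\mathbb{Z}_n$ is $\mu_q$-invariant if $\mu_q(P)=P$. $\rho_{s,t}:\mathbb{Z}_n\to\mathbb{Z}_n$, $i\mapsto s(i+t)\bmod n$. Type-I duadic splittings of $\mathbb{Z}_n$ given by $\rho_{s,t}$ exist if there is a $\mu_q$-invariant $P$ with $\mathbb{Z}_n=P\cup\rho_{s,t}(P)$ a disjoint union. $\nu_2$ is the $2$-adic valuation, $\nu_2(0)=\infty$. *)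

(* Defs.v *)
From mathcomp Require Import all_boot all_order all_algebra.
Set Implicit Arguments. Unset Strict Implicit. Unset Printing Implicit Defensive.
Import Order.TTheory GRing.Theory Num.Theory.
Local Open Scope ring_scope.

(* Z_n is modelled by 'I_n = {0,...,n-1} (residues); maps int -> int are
   reduced mod n with the nonnegative remainder modz. *)

Definition zn_img (n : nat) (f : int -> int) (P : {set 'I_n}) : {set 'I_n} :=
  [set j : 'I_n | [exists i in P, (nat_of_ord j)%:Z == ((f (nat_of_ord i)%:Z) %% n%:Z)%Z]].

Definition mu (n : nat) (q : int) (i : int) : int := q * i.
Definition rho (n : nat) (s t : int) (i : int) : int := s * (i + t).

Definition mu_invariant (n : nat) (q : int) (P : {set 'I_n}) : Prop :=
  zn_img (mu n q) P = P.

Definition typeI_duadic_exists (n : nat) (q s t : int) : Prop :=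
  exists P : {set 'I_n}, mu_invariant q P /\
    P :&: zn_img (rho n s t) P = set0 /\ P :|: zn_img (rho n s t) P = setT.

(* 2-adic valuation, None = infinity (nu2 0 = oo) *)
Definition nu2 (x : int) : option nat :=
  if x == 0 then None else Some (logn 2 `|x|%N).

Definition ext_gt (a b : option nat) : bool :=
  match a, b with
  | None, Some _ => true
  | Some x, Some y => (y < x)%N
  | _, _ => false
  end.

Definition prime_power (q : nat) : Prop :=
  exists p k : nat, prime p /\ (0 < k)%N /\ q = (p ^ k)%N.

(* Main.v *)
Require Import Defs.
From mathcomp Require Import all_boot all_order all_algebra zify ring.
Import Order.TTheory GRing.Theory Num.Theory.
Local Open Scope ring_scope.
Set Implicit Arguments. Unset Strict Implicit.

Section Toi.
Variable n : nat.
Hypothesis Hn : (0 < n)%N.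
Lemma toI_lt (x : int) : (absz (x %% n)%Z < n)%N. Proof. lia. Qed.
Definition toI (x : int) : 'I_n := Ordinal (toI_lt x).
Lemma toIE x : (nat_of_ord (toI x))%:Z = (x %% n)%Z.
Proof. rewrite /toI /=. lia. Qed.
Lemma toI_eq x y : (toI x == toI y) = (x == y %[mod n])%Z.
Proof.
apply/eqP/eqP => H.
  by have := congr1 (fun i : 'I_n => (nat_of_ord i)%:Z) H; rewrite /= !toIE.
by apply: val_inj => /=; rewrite H.
Qed.
Lemma toI_ord (i : 'I_n) : toI (nat_of_ord i)%:Z = i.
Proof. apply: val_inj => /=; have := ltn_ord i => lt; rewrite modz_small //; lia. Qed.
Lemma toI_congr x y : (x = y %[mod n])%Z -> toI x = toI y.
Proof. by move=> H; apply/eqP; rewrite toI_eq H. Qed.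
Lemma zn_imgE f (P : {set 'I_n}) : zn_img f P = [set toI (f (nat_of_ord i)%:Z) | i in P].
Proof.
apply/setP => j; rewrite !inE; apply/existsP/imsetP.
  move=> [i /andP[iP /eqP e]]; exists i => //; apply: val_inj => /=.
  by apply/eqP; rewrite -eqz_nat e -toIE.
move=> [i iP ->]; exists i; by rewrite iP /= toIE eqxx.
Qed.
End Toi.

Lemma odd_cancel (N : nat) (c x y : int) : ~~ (2 %| c)%Z ->
  (c * x == c * y %[mod (2 ^ N)%N%:Z])%Z -> (x == y %[mod (2 ^ N)%N%:Z])%Z.
Proof.
move=> hc; rewrite !eqz_mod_dvd -mulrBr Gauss_dvdzr //.
rewrite coprimezE /= coprimeXl // coprime2n.
by move: hc; rewrite dvdzE /= dvdn2 negbK.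
Qed.

Lemma mul_inj (N : nat) (HN : (0 < 2 ^ N)%N) (c : int) : ~~ (2 %| c)%Z ->
  injective (fun i : 'I_(2 ^ N) => toI HN (c * (nat_of_ord i)%:Z)).
Proof.
move=> hc i k /eqP; rewrite toI_eq => /(odd_cancel hc) H.
by rewrite -[i](toI_ord HN) -[k](toI_ord HN); apply/eqP; rewrite toI_eq.
Qed.

Lemma rho_inj (N : nat) (HN : (0 < 2 ^ N)%N) (s t : int) : ~~ (2 %| s)%Z ->
  injective (fun i : 'I_(2 ^ N) => toI HN (s * ((nat_of_ord i)%:Z + t))).
Proof.
move=> hc i k /eqP; rewrite toI_eq => /(odd_cancel hc).
rewrite eqz_modDr => H.
by rewrite -[i](toI_ord HN) -[k](toI_ord HN); apply/eqP; rewrite toI_eq.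
Qed.

Lemma mod_weaken (M N x y : int) : (M %| N)%Z ->
  (x == y %[mod N])%Z -> (x == y %[mod M])%Z.
Proof. by move=> h; rewrite !eqz_mod_dvd; apply: dvdz_trans. Qed.

Section Bit.
Variable K : int.
Hypothesis K0 : 0 < K.
Definition bb (x : int) := ((x %% (2 * K))%Z < K).
Lemma bb_congr x y : (x == y %[mod 2 * K])%Z -> bb x = bb y.
Proof. by move/eqP; rewrite /bb => ->. Qed.
Lemma bb_K x : bb (x + K) = ~~ bb x.
Proof.
rewrite /bb -modzDml.
have h0 := modz_ge0 x (d := 2 * K).
have h1 := ltz_pmod x (d := 2 * K).
move: (x %% (2 * K))%Z h0 h1 => r h0 h1.
have K2 : 2 * K != 0 by lia.
have h1' : r < 2 * K by apply: h1; lia.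
move: (h0 K2) => {}h0.
case: (ltrP r K) => hr.
  rewrite modz_small; lia.
have -> : r + K = (r - K) + 2 * K by ring.
rewrite modzDr modz_small; lia.
Qed.
End Bit.

Lemma nu2_dvd x w : ext_gt (nu2 x) (Some w) -> ((2 ^ w.+1)%N%:Z %| x)%Z.
Proof.
rewrite /nu2; case: eqP => [->|/eqP nz] /=; first by rewrite dvdz0.
move=> h; rewrite dvdzE /= pfactor_dvdn //; rewrite absz_gt0 //.
Qed.

Lemma two_pow_split (x : int) : x != 0 ->
  exists2 x' : int, x = x' * (2 ^ logn 2 `|x|)%N%:Z & ~~ (2 %| x')%Z.
Proof.
move=> x0.
have xpos : (0 < `|x|)%N by rewrite absz_gt0.
have nd : ~~ ((2 ^ (logn 2 `|x|).+1)%N%:Z %| x)%Z.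
  by rewrite dvdzE /= pfactor_dvdn // ltnn.
have : ((2 ^ logn 2 `|x|)%N%:Z %| x)%Z by rewrite dvdzE /= pfactor_dvdn.
move: nd; set l := logn 2 `|x| => nd.
case/dvdzP => x' hx; exists x' => //.
apply/negP => /dvdzP [a ha]; move: nd; apply/negP; rewrite negbK.
by rewrite hx ha expnS PoszM; apply/dvdzP; exists a; ring.
Qed.

Theorem lemma3p4 (q v : nat) (s t : int) :
  prime_power q -> odd q -> (1 <= v)%N ->
  ~~ (2 %| s)%Z ->
  (q%:Z * t = t %[mod (2 ^ v)%N%:Z])%Z ->
  (t != 0 %[mod (2 ^ v)%N%:Z])%Z ->
  (typeI_duadic_exists (2 ^ v) q%:Z s t <->
   (forall j : nat, ext_gt (nu2 (q%:Z ^+ j - s)) (nu2 t))).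
Proof.
move=> _ qodd v1 sodd _ tnz.
have HN : (0 < 2 ^ v)%N by rewrite expn_gt0.
have t0 : t != 0 by apply/eqP => ht; move: tnz; rewrite ht eqxx.
set w := logn 2 `|t|.
have nut : nu2 t = Some w by rewrite /nu2 (negbTE t0).
have [t' ht t'odd] := two_pow_split t0.
rewrite -/w in ht.
have qodd' : ~~ (2 %| q%:Z)%Z by rewrite dvdzE /= dvdn2 qodd.
split.
- move=> [P [HP [Hdis Hun]]] j.
  rewrite /mu_invariant (zn_imgE HN) /mu in HP.
  rewrite (zn_imgE HN) /rho in Hdis Hun.
  rewrite nut; apply/negPn/negP => hng.
  set d := q%:Z ^+ j - s in hng.
  have d0 : d != 0 by apply/negP => /eqP hd; move: hng; rewrite /nu2 hd eqxx.
  have [d' hd d'odd] := two_pow_split d0.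
  move: hng; rewrite /nu2 (negbTE d0) /= -leqNgt => hew.
  set e := logn 2 `|d| in hd hew.
  have gi := @mul_inj _ HN _ d'odd.
  have [i hi] : exists i : 'I_(2 ^ v), toI HN (d' * (nat_of_ord i)%:Z) =
                          toI HN (s * t' * (2 ^ (w - e))%N%:Z).
    by case/codomP: (injF_onto gi (toI HN (s * t' * (2 ^ (w - e))%N%:Z))) => i ->; exists i.
  have key : toI HN (s * ((nat_of_ord i)%:Z + t)) = toI HN (q%:Z ^+ j * (nat_of_ord i)%:Z).
    apply/eqP; rewrite toI_eq eqz_mod_dvd.
    move: hi => /eqP; rewrite toI_eq eqz_mod_dvd => hi.
    have hs : s = q%:Z ^+ j - d' * (2 ^ e)%N%:Z by rewrite -hd /d; ring.
    have hw : (2 ^ w)%N%:Z = (2 ^ e)%N%:Z * (2 ^ (w - e))%N%:Z.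
      by rewrite -PoszM -expnD subnKC.
    have -> : s * ((nat_of_ord i)%:Z + t) - q%:Z ^+ j * (nat_of_ord i)%:Z =
       - ((2 ^ e)%N%:Z * (d' * (nat_of_ord i)%:Z - s * t' * (2 ^ (w - e))%N%:Z)).
      rewrite {1}ht hw {1 2}hs; move: (Posz (2 ^ e)) (Posz (2 ^ (w - e))) => E F; ring.
    by rewrite rpredN dvdz_mull.
  have powc : forall k (x : 'I_(2 ^ v)),
      (toI HN (q%:Z ^+ k * (nat_of_ord x)%:Z) \in P) = (x \in P).
    elim => [|k IH] x; first by rewrite expr0 mul1r toI_ord.
    rewrite (@toI_congr _ HN _ (q%:Z * (nat_of_ord (toI HN (q%:Z ^+ k * (nat_of_ord x)%:Z)))%:Z)).
      by rewrite -{1}HP mem_imset ?IH //; apply: mul_inj.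
    by rewrite toIE modzMmr exprS mulrA.
  have hmem := mem_imset P i (@rho_inj _ HN s t sodd).
  case iP: (i \in P).
    have : toI HN (s * ((nat_of_ord i)%:Z + t)) \in
           P :&: [set toI HN (s * ((nat_of_ord i0)%:Z + t)) | i0 in P].
      by rewrite inE hmem iP andbT key powc iP.
    by rewrite Hdis inE.
  have : toI HN (s * ((nat_of_ord i)%:Z + t)) \in
         P :|: [set toI HN (s * ((nat_of_ord i0)%:Z + t)) | i0 in P].
    by rewrite Hun inE.
  by rewrite inE hmem iP orbF key powc iP.
- move=> H.
  have wv : (w < v)%N.
    rewrite ltnNge; apply/negP => hv; move: tnz; apply/negP; rewrite negbK.
    rewrite eqz_mod_dvd subr0 ht dvdz_mull // dvdzE /= dvdn_exp2l //.
  have h0 := H 0%N; have h1 := H 1%N.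
  rewrite nut in h0 h1.
  move: h0 h1 => /nu2_dvd h0 /nu2_dvd h1.
  rewrite expr0 in h0; rewrite expr1 in h1.
  set K := (2 ^ w)%N%:Z in ht.
  have MK : (2 ^ w.+1)%N%:Z = 2 * K by rewrite expnS PoszM.
  rewrite MK in h0 h1.
  have K0 : 0 < K by rewrite ltz_nat expn_gt0.
  have Mn : (2 * K %| (2 ^ v)%N%:Z)%Z by rewrite -MK dvdzE /= dvdn_exp2l.
  clearbody K.
  have bmod x : bb K (x %% (2 ^ v)%N%:Z)%Z = bb K x.
    by apply: bb_congr; apply: mod_weaken Mn _; apply/eqP; exact: modz_mod.
  have btoI x : bb K (nat_of_ord (toI HN x))%:Z = bb K x by rewrite toIE bmod.
  have tK : (t == K %[mod 2 * K])%Z.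
    rewrite eqz_mod_dvd ht.
    have -> : t' * K - K = (t' - 1) * K by ring.
    apply: dvdz_mul; last exact: dvdzz.
    by clear -t'odd; lia.
  have bq x : bb K (q%:Z * x) = bb K x.
    apply: bb_congr; rewrite eqz_mod_dvd.
    have -> : q%:Z * x - x = (q%:Z - s - (1 - s)) * x by ring.
    by apply: dvdz_mulr; rewrite rpredB.
  have bs x : bb K (s * (x + t)) = ~~ bb K x.
    rewrite -bb_K //; apply: bb_congr; rewrite eqz_mod_dvd.
    have -> : s * (x + t) - (x + K) = - ((1 - s) * (x + t)) + (t - K) by ring.
    by rewrite rpredD ?rpredN ?dvdz_mulr // -eqz_mod_dvd.
  exists [set i : 'I_(2 ^ v) | bb K (nat_of_ord i)%:Z].
  rewrite /mu_invariant !(zn_imgE HN) /mu /rho; split; [|split].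
  + apply/eqP; rewrite eqEcard card_imset; last exact: mul_inj.
    rewrite leqnn andbT; apply/subsetP => y /imsetP [i iP ->].
    by rewrite inE btoI bq; rewrite inE in iP.
  + apply/setP => y; rewrite !inE; apply/negP => /andP [yP /imsetP [i iP hy]].
    by move: yP; rewrite hy btoI bs; rewrite inE in iP; rewrite iP.
  + apply/setP => y; rewrite !inE; case yP: (bb K _) => //=.
    case/codomP: (injF_onto (@rho_inj _ HN s t sodd) y) => i hy.
    apply/imsetP; exists i => //; rewrite inE.
    by move: yP; rewrite hy btoI bs; case: (bb K _).
Qed.
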